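(* (a) If $P_n$ is a path of order $n$, then $S_2(P_n)$ is a DPDP-graph for every $n\ge 2$, and $S_2(P_n)$ is a minimal DPDP-graph if and only if $n\in\{2,3,4,5\}$. (b) If $C_m$ is a cycle of size $m$ (where $C_1$ is a vertex with one loop and $C_2$ consists of two vertices joined by two parallel edges), then $S_2(C_m)$ is a DPDP-graph for every positive integer $m$, and $S_2(C_m)$ is a minimal DPDP-graph if and only if $m\in\{1,2,3\}$.
   Context: Graphs are finite and may have multiple edges and loops. A leaf is a vertex of degree one. A set $D\subseteq V(G)$ is dominating if every vertex outside $D$ has a neighbor in $D$; $P$ is paired-dominating if it is dominating and the subgraph induced by $P$ has a perfect matching. A DPDP-graph is a graph $G$ admitting disjoint sets $D,P$ with $V(G)=D\cup P$, $D$ dominating and $P$ paired-dominating; a minimal DPDP-graph is a DPDP-graph no proper spanning subgraph of which is a DPDP-graph. 2-subdivision graph: for a graph $H$ with no isolated vertex, set of leaves $L_H$, and $\alpha:L_H\to\mathbb{N}=\{1,2,\dots\}$, $S_2(H)$ has vertex set $(V_H\setminus L_H)\cup\{(v,i): v\in L_H, 1\le i\le \alpha(v)\}$ together with two new vertices for each edge $e$ of $H$ ($u_e,v_e$ if $e$ joins $u\ne v$; $v_e^1,v_e^2$ if $e$ is a loop at $v$). Its edges are: the edge joining the two new vertices of each $e$; for $v\in V_H\setminus L_H$, $vv_e$ for each non-loop edge $e$ at $v$ and $vv_e^1,vv_e^2$ for each loop $e$ at $v$; for $v\in L_H$ with incident edge $e$, the edges $v_e(v,i)$, $1\le i\le\alpha(v)$.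 In (a) the function $\alpha$ on the leaves of $P_n$ is arbitrary. *)

(* Defs.v *)
From mathcomp Require Import all_boot.
From mathcomp Require Import zify.
Set Implicit Arguments. Unset Strict Implicit. Unset Printing Implicit Defensive.

Section DPDP.
Variables (T : finType) (adj : rel T).

Definition dominating (D : {set T}) : Prop :=
  forall x, x \notin D -> exists2 y, y \in D & adj x y.

Definition perfect_matching_of_induced (P : {set T}) (M : {set {set T}}) : Prop :=
  (forall e, e \in M ->
     exists x y, [/\ x != y, x \in P, y \in P, adj x y & e = [set x; y]]) /\
  (forall x, x \in P -> exists! e, e \in M /\ x \in e).

Definition paired_dominating (P : {set T}) : Prop :=
  dominating P /\ exists M, perfect_matching_of_induced P M.

Definition DPDP : Prop :=
  exists D P : {set T},
    [/\ [disjoint D & P], D :|: P = setT, dominating D & paired_dominating P].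
End DPDP.

(* Spanning
   subgraphs of the simple graph (T, adj) are the graphs (T, adj') with
   adj' a symmetric subrelation of adj; proper means some edge is lost. *)
Definition minimal_DPDP (T : finType) (adj : rel T) : Prop :=
  DPDP adj /\
  forall adj' : rel T, symmetric adj' -> subrel adj' adj ->
    (exists x y, adj x y && ~~ adj' x y) -> ~ DPDP adj'.

(* Multigraphs H = (V, E, ends): each edge e has endpoints ends e     *)
(* (a loop when both coincide).  Half-edges are pairs (e, side).       *)
Section S2.
Variables (V E : finType) (ends : E -> V * V) (alpha : V -> nat).

Definition endpt (h : E * bool) : V :=
  if h.2 then (ends h.1).2 else (ends h.1).1.

(* degree, loops counted twice *)
Definition deg (v : V) : nat := #|[set h : E * bool | endpt h == v]|.
Definition leaf (v : V) : bool := deg v == 1.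

(* vertices of S_2(H):
   inl (inl v)      : v a non-leaf vertex of H
   inl (inr (v,i))  : the copy (v, i+1), v a leaf, 0 <= i < alpha v
   inr (e, s)       : the new vertex of edge e on side s
                      (u_e / v_e for a non-loop, v_e^1 / v_e^2 for a loop) *)
Definition S2_vertex : finType :=
  (({v : V | ~~ leaf v} + {x : {v : V & 'I_(alpha v)} | leaf (tag x)})
     + (E * bool))%type.

Definition S2_adj : rel S2_vertex := fun x y =>
  match x, y with
  | inr h, inr h' => (h.1 == h'.1) && (h.2 != h'.2)
  | inl (inl v), inr h | inr h, inl (inl v) => endpt h == val v
  | inl (inr c), inr h | inr h, inl (inr c) => endpt h == tag (val c)
  | _, _ => false
  end.
End S2.
Arguments endpt {V E} ends h.
Arguments deg {V E} ends v.
Arguments leaf {V E} ends v.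
Arguments S2_vertex {V E} ends alpha.
Arguments S2_adj {V E} ends alpha x y.

Lemma path_lt1 n (j : 'I_n.-1) : j < n.
Proof. case: j => j /=; lia. Qed.
Lemma path_lt2 n (j : 'I_n.-1) : j.+1 < n.
Proof. case: j => j /=; lia. Qed.

Definition path_ends (n : nat) (j : 'I_n.-1) : 'I_n * 'I_n :=
  (Ordinal (path_lt1 j), Ordinal (path_lt2 j)).

(* C_m: vertices 0..m-1, edge j joins j and j+1 mod m;
   C_1 is one vertex with a loop, C_2 two vertices with two parallel edges *)
Definition cycle_ends (m : nat) (j : 'I_m) : 'I_m * 'I_m := (j, ordS j).

(* Main.v *)
Require Import Defs.
From mathcomp Require Import all_boot zify.
Set Implicit Arguments. Unset Strict Implicit. Unset Printing Implicit Defensive.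

Section Generic.
Variables (T : finType) (adj : rel T).

Lemma dpdp_local : symmetric adj -> DPDP adj -> exists D : {set T},
  (forall x, x \notin D -> (exists2 y, y \notin D & adj x y) /\ (exists2 y, y \in D & adj x y)) /\
  (forall x, x \in D -> exists2 y, y \notin D & adj x y).
Proof.
move=> sym [D [P [dis DP domD [domP [M [HM1 HM2]]]]]].
have PD : forall x, (x \in P) = (x \notin D).
  move=> x; apply/idP/idP.
  - move=> xP; apply/negP=> xD; by rewrite (disjointFr dis xD) in xP.
  - move=> xD; have : x \in D :|: P by rewrite DP inE.
    by rewrite inE (negbTE xD).
exists D; split.
- move=> x xD; split; last by apply: domD.
  have xP : x \in P by rewrite PD.
  case: (HM2 x xP) => e [[eM xe] _].
  case: (HM1 e eM) => a [b [ab aP bP ad eab]].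
  move: xe; rewrite eab !inE => /orP [] /eqP ->.
  + by exists b; rewrite -?PD.
  + by exists a; rewrite -?PD // sym.
- move=> x xD; case: (domP x); first by rewrite PD xD.
  by move=> y; rewrite PD => yP xy; exists y.
Qed.

Lemma dpdp_mono (adj2 : rel T) : subrel adj adj2 -> DPDP adj -> DPDP adj2.
Proof.
move=> sub [D [P [dis DP domD [domP [M [HM1 HM2]]]]]].
exists D, P; split => //.
- by move=> x /domD [y yD /sub xy]; exists y.
split; first by move=> x /domP [y yD /sub xy]; exists y.
exists M; split => // e /HM1 [a [b [ab aP bP /sub ad ->]]].
by exists a, b.
Qed.

Lemma dpdp_of_partner (D : {set T}) (f : T -> T) :
  (forall x, x \notin D -> [/\ (exists2 y, y \in D & adj x y), f x \notin D,
                              adj x (f x), f (f x) = x & f x != x]) ->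
  (forall x, x \in D -> exists2 y, y \notin D & adj x y) ->
  DPDP adj.
Proof.
move=> HP HD; exists D, (~: D); split.
- by rewrite disjoints_subset setCK.
- by rewrite setUCr.
- move=> x xD.
  by case: (HP x xD).
split.
- move=> x; rewrite inE negbK => xD; case: (HD x xD).
  by move=> y yD xy; exists y; rewrite ?inE.
exists [set [set x; f x] | x in ~: D]; split.
- move=> e /imsetP [x]; rewrite inE => xD ->.
  case: (HP x xD) => _ fxD xf _ fxx.
  by exists x, (f x); split; rewrite ?inE // eq_sym.
- move=> x; rewrite inE => xD; exists [set x; f x]; split.
  + by split; [apply/imsetP; exists x; rewrite ?inE | rewrite !inE eqxx].
  + move=> e' [/imsetP [y]]; rewrite inE => yD -> ; rewrite !inE => /orP [] /eqP ->.
    * by [].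
    * case: (HP y yD) => _ _ _ ffy _. by rewrite ffy setUC.
Qed.

Lemma dpdp_nbr : symmetric adj -> DPDP adj -> forall x, exists y, adj x y.
Proof.
move=> sym /(dpdp_local sym) [D [H1 H2]] x.
case: (boolP (x \in D)) => xD.
- by case: (H2 x xD) => y _ xy; exists y.
- by case: (H1 x xD) => [[y _ xy] _]; exists y.
Qed.

End Generic.

Definition locb (N : nat) (e : rel nat) (b : nat -> bool) : bool :=
  all (fun i => if b i then has (fun j => b j && e i j) (iota 0 N) &&
                            has (fun j => ~~ b j && e i j) (iota 0 N)
                else has (fun j => b j && e i j) (iota 0 N)) (iota 0 N).

Definition rm (e : rel nat) (a b : nat) : rel nat := fun i j =>
  e i j && ~~ ((i == a) && (j == b) || (i == b) && (j == a)).

Section Blowup.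
Variables (T : finType) (adj : rel T) (lbl : T -> nat) (e : rel nat) (N : nat).
Hypothesis Hadj : forall x y, adj x y = e (lbl x) (lbl y).
Hypothesis Hlt : forall x, lbl x < N.
Hypothesis Hsurj : forall i, i < N -> exists x, lbl x = i.

Definition single i := forall x y, lbl x = i -> lbl y = i -> x = y.
Definition pendant i := exists k, single k /\ forall j, e i j -> j = k.
Hypothesis Hfib : forall i, i < N -> single i \/ pendant i.

Hypothesis Hsym : symmetric adj.

Lemma blowup_refute : DPDP adj -> exists b, locb N e b.
Proof.
move=> /(dpdp_local Hsym) [D [H1 H2]].
pose b i := [exists x, (lbl x == i) && (x \notin D)].
have pendD : forall i, pendant i -> forall x, lbl x = i -> x \in D.
  move=> i [k [sk ek]] x lx; apply/negPn/negP => xD.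
  case: (H1 x xD) => [[y yD xy] [z zD xz]].
  rewrite Hadj lx in xy; rewrite Hadj lx in xz.
  have yz : y = z by apply: sk; [apply: ek | apply: ek].
  by rewrite yz zD in yD.
have bD : forall y, y \in D -> b (lbl y) = false.
  move=> y yD; apply/negbTE/existsP => [[x /andP [/eqP lxy xD]]].
  case: (Hfib (Hlt y)) => [sy | py].
  - by rewrite (sy x y lxy erefl) yD in xD.
  - by rewrite (pendD _ py x lxy) in xD.
have bP : forall y, y \notin D -> b (lbl y).
  by move=> y yD; apply/existsP; exists y; rewrite eqxx.
exists b; apply/allP => i; rewrite mem_iota add0n => /andP [_ iN].
case bi: (b i).
- case/existsP: bi => x /andP [/eqP lx xD].
  case: (H1 x xD) => [[y yD xy] [z zD xz]].
  apply/andP; split; apply/hasP.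
  + exists (lbl y); first by rewrite mem_iota add0n Hlt.
    by rewrite bP // -lx -Hadj.
  + exists (lbl z); first by rewrite mem_iota add0n Hlt.
    by rewrite bD // -lx -Hadj.
- case: (Hsurj iN) => x lx.
  have xD : x \in D.
    apply/negPn/negP => xD; by rewrite -lx bP in bi.
  case: (H2 x xD) => y yD xy; apply/hasP; exists (lbl y).
  + by rewrite mem_iota add0n Hlt.
  + by rewrite bP // -lx -Hadj.
Qed.
End Blowup.

Section Build.
Variables (T : finType) (adj : rel T) (lbl : T -> nat) (e : rel nat) (N : nat).
Hypothesis Hadj : forall x y, adj x y = e (lbl x) (lbl y).
Hypothesis Hsurj : forall i, i < N -> exists x, lbl x = i.
Hypothesis Hlt : forall x, lbl x < N.

Lemma blowup_build (d : nat -> bool) (p : nat -> nat) :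
  (forall i, i < N -> d i -> exists j, [/\ j < N, ~~ d j & e i j]) ->
  (forall i, i < N -> ~~ d i -> (exists j, [/\ j < N, d j & e i j]) /\
      [/\ p i < N, ~~ d (p i), e i (p i), p (p i) = i & p i != i]) ->
  (forall i, i < N -> ~~ d i -> single lbl i) ->
  DPDP adj.
Proof.
move=> Hd Hp Hs.
pose f x := if [pick y | lbl y == p (lbl x)] is Some y then y else x.
have lf : forall x, ~~ d (lbl x) -> lbl (f x) = p (lbl x).
  move=> x dx; rewrite /f; case: pickP => [y /eqP //|].
  case: (Hp _ (Hlt x) dx) => _ [pN _ _ _ _].
  case: (Hsurj pN) => y ly /(_ y); by rewrite ly eqxx.
apply: (@dpdp_of_partner _ _ [set x | d (lbl x)] f).
- move=> x; rewrite inE => dx.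
  case: (Hp _ (Hlt x) dx) => [[j [jN dj ej]] [pN dp ep pp pne]].
  split.
  + case: (Hsurj jN) => y ly; exists y; by rewrite ?inE ?ly // Hadj ly.
  + by rewrite inE lf.
  + by rewrite Hadj lf.
  + have dfx : ~~ d (lbl (f x)) by rewrite lf.
    apply: (Hs _ (Hlt x) dx) => //. by rewrite (lf _ dfx) lf.
  + apply/eqP => fx. move: pne; by rewrite -lf // fx eqxx.
- move=> x; rewrite inE => dx.
  case: (Hd _ (Hlt x) dx) => j [jN dj ej].
  case: (Hsurj jN) => y ly; exists y; by rewrite ?inE ?ly // Hadj ly.
Qed.
End Build.

Section Minimal.
Variables (T : finType) (adj : rel T) (lbl : T -> nat) (e : rel nat) (N : nat).
Hypothesis Hadj : forall x y, adj x y = e (lbl x) (lbl y).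
Hypothesis Hlt : forall x, lbl x < N.
Hypothesis Hsurj : forall i, i < N -> exists x, lbl x = i.
Hypothesis Hfib : forall i, i < N -> single lbl i \/ pendant lbl e i.
Hypothesis Hsym : symmetric adj.

Lemma minimal_refute :
  (forall a b, a < N -> b < N -> e a b -> forall bb, ~~ locb N (rm e a b) bb) ->
  forall adj2 : rel T, symmetric adj2 -> subrel adj2 adj ->
    (exists x y, adj x y && ~~ adj2 x y) -> ~ DPDP adj2.
Proof.
move=> chk adj2 sym2 sub [x0 [y0 /andP [a0 n0]]] D2.
have iso : forall x y, pendant lbl e (lbl x) -> adj x y -> ~~ adj2 x y -> False.
  move=> x y [k [sk ek]] xy nxy.
  case: (dpdp_nbr sym2 D2 x) => z xz.
  have := sub _ _ xz; rewrite Hadj => /ek lz.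
  move: xy; rewrite Hadj => /ek ly.
  move: xz; rewrite (sk z y lz ly) => xz; by rewrite xz in nxy.
case: (Hfib (Hlt x0)) => [s0|]; last by move=> p0; apply: (iso x0 y0).
case: (Hfib (Hlt y0)) => [t0|]; last first.
  move=> p0; apply: (iso y0 x0) => //; [by rewrite Hsym | by rewrite sym2].
pose adj3 x y := adj x y && ~~ ((x == x0) && (y == y0) || (x == y0) && (y == x0)).
have D3 : DPDP adj3.
  apply: (dpdp_mono _ D2) => x y xy; rewrite /adj3 (sub _ _ xy) /=.
  apply/negP => /orP [] /andP [/eqP ex /eqP ey]; move: xy; rewrite ex ey.
  - by rewrite (negbTE n0).
  - by rewrite sym2 (negbTE n0).
have E0 : forall x, (x == x0) = (lbl x == lbl x0).
  move=> x; apply/eqP/eqP => [-> //|]; by move/s0 => /(_ x0 erefl).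
have E1 : forall x, (x == y0) = (lbl x == lbl y0).
  move=> x; apply/eqP/eqP => [-> //|]; by move/t0 => /(_ y0 erefl).
have H3 : forall x y, adj3 x y = rm e (lbl x0) (lbl y0) (lbl x) (lbl y).
  by move=> x y; rewrite /adj3 /rm Hadj !E0 !E1.
have sym3 : symmetric adj3.
  move=> x y; rewrite /adj3 [adj x y]Hsym.
  by case: (x == x0); case: (y == y0); case: (x == y0); case: (y == x0).
have Hfib3 : forall i, i < N -> single lbl i \/ pendant lbl (rm e (lbl x0) (lbl y0)) i.
  move=> i /Hfib [] ; first by left.
  move=> [k [sk ek]]; right; exists k; split => // j /andP [ej _]; exact: ek.
case: (blowup_refute H3 Hlt Hsurj Hfib3 sym3 D3) => bb.
apply/negP; apply: (chk (lbl x0) (lbl y0) (Hlt x0) (Hlt y0)).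
by rewrite -Hadj.
Qed.
End Minimal.

Fixpoint allbits n : seq (seq bool) :=
  if n is n'.+1 then map (cons false) (allbits n') ++ map (cons true) (allbits n') else [:: [::]].

Lemma allbitsP s : s \in allbits (size s).
Proof.
elim: s => [|x s IH] //=.
rewrite mem_cat; apply/orP; case: x; [right|left]; exact: map_f.
Qed.

Lemma locb_nth N e b : locb N e b = locb N e (nth false (mkseq b N)).
Proof.
have Hb : {in iota 0 N, forall j, b j = nth false (mkseq b N) j}.
  by move=> j; rewrite mem_iota add0n /= => jN; rewrite nth_mkseq.
apply: eq_in_all => i iN; rewrite -Hb //.
have Hh : forall q : bool -> bool, has (fun j => q (b j) && e i j) (iota 0 N) =
   has (fun j => q (nth false (mkseq b N) j) && e i j) (iota 0 N).
  by move=> q; apply: eq_in_has => j jN; rewrite -Hb.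
by rewrite (Hh id) (Hh negb).
Qed.

Definition nbl N (e : rel nat) : seq (seq nat) :=
  [seq [seq j <- iota 0 N | e i j] | i <- iota 0 N].

Fixpoint allL (p : nat -> bool) (s : seq nat) : bool :=
  if s is x :: s' then (if p x then allL p s' else false) else true.
Fixpoint hasL (p : nat -> bool) (s : seq nat) : bool :=
  if s is x :: s' then (if p x then true else hasL p s') else false.
Fixpoint allS (p : seq bool -> bool) (s : seq (seq bool)) : bool :=
  if s is x :: s' then (if p x then allS p s' else false) else true.

Lemma allLE p s : allL p s = all p s.
Proof. by elim: s => //= x s ->; case: (p x). Qed.
Lemma hasLE p s : hasL p s = has p s.
Proof. by elim: s => //= x s ->; case: (p x). Qed.
Lemma allSE p s : allS p s = all p s.
Proof. by elim: s => //= x s ->; case: (p x). Qed.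

Definition locl (nb : seq (seq nat)) (s : seq bool) : bool :=
  allL (fun i => let ns := nth [::] nb i in
     if nth false s i then (if hasL (nth false s) ns then hasL (fun j => ~~ nth false s j) ns else false)
     else hasL (nth false s) ns) (iota 0 (size nb)).

Lemma locl_ok N e s : locl (nbl N e) s = locb N e (nth false s).
Proof.
rewrite /locl /locb allLE size_map size_iota; apply: eq_in_all => i.
rewrite mem_iota add0n /= => iN.
rewrite !hasLE (nth_map 0) ?size_iota // nth_iota // add0n !has_filter.
by rewrite -!filter_predI; case: ifP => //; case: ifP.
Qed.

Definition checkN N (e : rel nat) :=
  let A := allbits N in
  allL (fun a => allL (fun b => if e a b then
     (let nb := nbl N (rm e a b) in allS (fun s => ~~ locl nb s) A) else true) (iota 0 N)) (iota 0 N).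

Lemma checkN_ok N e : checkN N e ->
  forall a b, a < N -> b < N -> e a b -> forall bb, ~~ locb N (rm e a b) bb.
Proof.
rewrite /checkN allLE => /allP chk a b aN bN eab bb.
have := chk a; rewrite mem_iota add0n aN => /(_ erefl); rewrite allLE => /allP /(_ b).
rewrite mem_iota add0n bN eab => /(_ erefl) /=; rewrite allSE => /allP /(_ (mkseq bb N)).
rewrite locl_ok -locb_nth; apply; rewrite -{2}(size_mkseq bb N); exact: allbitsP.
Qed.

Lemma ord_eqE k (a b : 'I_k) : (a == b) = (nat_of_ord a == nat_of_ord b).
Proof. by []. Qed.

Definition pe (L : nat) : rel nat := fun i j =>
  [|| (i < L) && (j < L) && ((i.+1 == j) || (j.+1 == i)),
      (i == L) && (j == 0), (j == L) && (i == 0),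
      (i == L.+1) && (j == L.-1) | (j == L.+1) && (i == L.-1)].

Definition dP L i := (L <= i) || (i %% 3 == 2).
Definition pp (d : nat -> bool) i := if d i.-1 || (i == 0) then i.+1 else i.-1.

Lemma peC L i j : i < L -> j < L -> pe L i j = (i.+1 == j) || (j.+1 == i).
Proof. move=> iL jL; rewrite /pe iL jL /=; apply/idP/idP; lia. Qed.

Lemma ppP L i : L %% 3 = 2 -> i <= L -> pp (dP L) i = if i %% 3 == 0 then i.+1 else i.-1.
Proof. move=> L3 iL; rewrite /pp /dP; case: ifP; case: ifP; lia. Qed.

Lemma path_std L : 2 <= L -> L %% 3 = 2 ->
  (forall i, i < L.+2 -> dP L i -> exists j, [&& j < L.+2, ~~ dP L j & pe L i j]) /\
  (forall i, i < L.+2 -> ~~ dP L i -> (exists j, [&& j < L.+2, dP L j & pe L i j]) /\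
      [&& pp (dP L) i < L.+2, ~~ dP L (pp (dP L) i), pe L i (pp (dP L) i),
          pp (dP L) (pp (dP L) i) == i & pp (dP L) i != i]).
Proof.
move=> L2 L3; split.
- move=> i iN di; case: (ltnP i L) => iL.
  + exists i.-1; move: di; rewrite /dP peC; lia.
  + case: (i =P L) => [->|ne].
    * exists 0; rewrite /dP /pe; lia.
    * exists L.-1; have -> : i = L.+1 by lia.
      rewrite /dP /pe; lia.
- move=> i iN di.
  have iL : i < L by move: di; rewrite /dP; lia.
  have i3 : i %% 3 != 2 by move: di; rewrite /dP; lia.
  split.
  + case: (i =P 0) => [->|i0]; first by exists L; rewrite /dP /pe; lia.
    case: (i =P L.-1) => [->|iL1]; first by exists L.+1; rewrite /dP /pe; lia.
    case: (i %% 3 =P 0) => i30.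
    * exists i.-1; rewrite /dP peC; lia.
    * exists i.+1; rewrite /dP peC; lia.
  + rewrite (ppP L3 (ltnW iL)); case: ifP => i30.
    * have h : i.+1 <= L by lia.
      rewrite (ppP L3 h) /dP peC; try lia.
      case: ifP; lia.
    * have h : i.-1 <= L by lia.
      rewrite (ppP L3 h) /dP peC; try lia.
      case: ifP; lia.
Qed.

Definition dW (d : nat -> bool) i :=
  ((2 <= i <= 11) && [|| i==2, i==3, i==6, i==7, i==10 | i==11]) || (~~(2 <= i <= 11) && d i).

Definition wD L i := match i with 0 => L | 1 => 2 | 4 => 3 | 5 => 6 | 8 => 7 | 9 => 10
  | 12 => 11 | 13 => if L == 14 then L.+1 else 14 | _ => 0 end.
Definition wP i := match i with 2 => 1 | 3 => 4 | 6 => 5 | 7 => 8 | 10 => 9 | 11 => 12 | _ => 0 end.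

Lemma path_win L : 14 <= L -> L %% 3 = 2 ->
  let d := dW (dP L) in let e := rm (pe L) 2 3 in
  (forall i, i < L.+2 -> d i -> exists j, [&& j < L.+2, ~~ d j & e i j]) /\
  (forall i, i < L.+2 -> ~~ d i -> (exists j, [&& j < L.+2, d j & e i j]) /\
      [&& pp d i < L.+2, ~~ d (pp d i), e i (pp d i),
          pp d (pp d i) == i & pp d i != i]).
Proof.
move=> L14 L3 d e.
have [S1 S2] := path_std (ltnW (leq_trans (isT : 2 < 14) L14)) L3.
have dE : forall j, (j < 2) || (11 < j) -> d j = dP L j.
  move=> j hj; rewrite /d /dW; case: (2 <= j <= 11) /andP => [?|_ //]; lia.
have eE : forall i j, 13 < i -> e i j = pe L i j.
  move=> i j hi; rewrite /e /rm; apply/andP/idP => [[]//|->]; split => //; lia.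
have far : forall i j, 13 < i -> pe L i j -> (j < 2) || (11 < j).
  move=> i j hi; rewrite /pe; lia.
split.
- move=> i iN di; case: (leqP i 13) => i13.
  + exists (wP i); move: iN i13 di; rewrite /d /e /rm /dW /dP /pe.
    by do 14 (try case: i => [|i]); move=> /= *; lia.
  + have di' : dP L i by rewrite -dE ?di //; lia.
    case: (S1 i iN di') => j /and3P [jN dj ej]; exists j.
    by rewrite jN dE ?dj ?eE //; apply: far ej.
- move=> i iN di; case: (leqP i 13) => i13.
  + split.
    * exists (wD L i); move: iN i13 di; rewrite /d /e /rm /dW /dP /pe.
      by do 14 (try case: i => [|i]); move=> /= *; repeat (case: ifP => /=); lia.
    * move: iN i13 di; rewrite /pp /d /e /rm /dW /dP /pe.
      by do 14 (try case: i => [|i]); move=> /= *; repeat (case: ifP => /=); lia.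
  + have di' : ~~ dP L i by rewrite -dE ?di //; lia.
    case: (S2 i iN di') => [[j /and3P [jN dj ej]]].
    have ppE : forall k, 12 < k -> pp d k = pp (dP L) k.
      move=> k hk; rewrite /pp dE //; lia.
    rewrite ppE //.
    move=> /and5P [pN pd pe' ppi pne].
    have pf : (pp (dP L) i < 2) || (11 < pp (dP L) i) by apply: far pe'.
    split.
    * exists j; by rewrite jN dE ?dj ?eE //; apply: far ej.
    * rewrite pN dE // pd eE // pe' ppE ?ppi //; rewrite /pp; case: ifP; lia. lia.
Qed.

Section Path.
Variables (n : nat) (alpha : 'I_n -> nat).
Hypothesis n2 : 2 <= n.

Lemma pendpt (h : 'I_n.-1 * bool) : val (endpt (@path_ends n) h) = h.1 + h.2.
Proof. by case: h => j []; rewrite /endpt /= ?addn1 ?addn0. Qed.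

Lemma pendptE (h : 'I_n.-1 * bool) v : (endpt (@path_ends n) h == v) = (h.1 + h.2 == nat_of_ord v).
Proof. by rewrite -val_eqE pendpt. Qed.

Lemma pmid (v : 'I_n) : 0 < nat_of_ord v < n.-1 -> ~~ leaf (@path_ends n) v.
Proof.
move=> /andP [v0 vn]; rewrite /leaf /deg.
have l1 : v.-1 < n.-1 by lia.
have l2 : nat_of_ord v < n.-1 by lia.
set S := [set h | _].
have : [set (Ordinal l1, true); (Ordinal l2, false)] \subset S.
  apply/subsetP => h; rewrite !inE => /orP [] /eqP -> ; rewrite pendptE /=; apply/eqP; lia.
move/subset_leq_card; rewrite cards2 => H; apply/negP => /eqP S1; move: H; by rewrite S1 xpair_eqE andbF.
Qed.

Lemma pend (v : 'I_n) : (nat_of_ord v == 0) || (nat_of_ord v == n.-1) -> leaf (@path_ends n) v.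
Proof.
move=> H; rewrite /leaf /deg.
have l1 : 0 < n.-1 by lia.
have l2 : n.-2 < n.-1 by lia.
pose h0 := if nat_of_ord v == 0 then (Ordinal l1, false) else (Ordinal l2, true).
suff -> : [set h | endpt (@path_ends n) h == v] = [set h0] by rewrite cards1.
apply/setP => [[j s]]; rewrite !inE pendptE /= /h0.
case: (nat_of_ord v =P 0) => [v0|v0]; rewrite xpair_eqE -val_eqE /=; have := ltn_ord j; case: s => /= jn; apply/idP/idP; lia.
Qed.

Lemma pleaf (v : 'I_n) : leaf (@path_ends n) v = (nat_of_ord v == 0) || (nat_of_ord v == n.-1).
Proof.
apply/idP/idP; last exact: pend.
move=> lv; apply/negPn/negP => H; move: lv; rewrite (negbTE (pmid _)) //.
have := ltn_ord v; lia.
Qed.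


Definition lblP (x : S2_vertex (@path_ends n) alpha) : nat :=
  match x with
  | inl (inl v) => 3 * nat_of_ord (val v) - 1
  | inl (inr c) => if nat_of_ord (tag (val c)) == 0 then 3 * n - 4 else (3 * n - 4).+1
  | inr h => 3 * nat_of_ord h.1 + h.2
  end.

Lemma padj x y : S2_adj (@path_ends n) alpha x y = pe (3 * n - 4) (lblP x) (lblP y).
Proof.
case: x => [[[v pv]|[[v i] pv]]|[j s]]; case: y => [[[w pw]|[[w i'] pw]]|[j' s']];
  rewrite /= ?pendptE ?ord_eqE /pe;
  (try (have := pv; rewrite pleaf /= => ?)); (try (have := pw; rewrite pleaf /= => ?));
  (try have := ltn_ord v); (try have := ltn_ord w); (try have := ltn_ord j); (try have := ltn_ord j');
  (try case: s); (try case: s'); rewrite /=; intros; repeat (case: ifP => ?);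
  apply/idP/idP; lia.
Qed.

Lemma pe_sym L : symmetric (pe L).
Proof. move=> i j; rewrite /pe; apply/idP/idP; lia. Qed.

Lemma padj_sym : symmetric (S2_adj (@path_ends n) alpha).
Proof. by move=> x y; rewrite !padj pe_sym. Qed.

Lemma plt x : lblP x < (3 * n - 4).+2.
Proof.
case: x => [[[v pv]|[[v i] pv]]|[j s]] /=;
  (try (have := pv; rewrite pleaf /= => ?));
  (try have := ltn_ord v); (try have := ltn_ord j); (try case: s);
  repeat (case: ifP => ?); intros; lia.
Qed.

Lemma psingle i : i < 3 * n - 4 -> single (@lblP) i.
Proof.
move=> iL [[[v pv]|[[v a] pv]]|[j s]] [[[w pw]|[[w b] pw]]|[j' s']] /= lx ly;
  (try (have := pv; rewrite pleaf /= => ?)); (try (have := pw; rewrite pleaf /= => ?));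
  (try have := ltn_ord v); (try have := ltn_ord w); (try have := ltn_ord j); (try have := ltn_ord j');
  move: lx ly; repeat (case: ifP => ?); (try case: s); (try case: s'); intros; try (exfalso; lia).
- have e : v = w by apply/ord_inj; lia.
  subst w; by rewrite (bool_irrelevance pv pw).
- have e : j = j' by apply/ord_inj; lia.
  by subst.
- have e : j = j' by apply/ord_inj; lia.
  by subst.
Qed.

Hypothesis Halpha : forall v, leaf (@path_ends n) v -> 0 < alpha v.

Lemma psurj i : i < (3 * n - 4).+2 -> exists x, lblP x = i.
Proof.
move=> iN.
have n0 : 0 < n by lia.
have n1 : n.-1 < n by lia.
case: (ltnP i (3 * n - 4)) => iL; last first.
  case: (i =P 3 * n - 4) => [-> | ne].
  - pose v := Ordinal n0.
    have lv : leaf (@path_ends n) v by apply: pend.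
    exists (inl (inr (exist _ (existT _ v (Ordinal (Halpha lv))) lv))) => /=.
    repeat (case: ifP => ?); lia.
  - pose v := Ordinal n1.
    have lv : leaf (@path_ends n) v by apply: pend; rewrite /= eqxx orbT.
    exists (inl (inr (exist _ (existT _ v (Ordinal (Halpha lv))) lv))) => /=.
    repeat (case: ifP => ?); lia.
case: (boolP (i %% 3 == 2)) => i2.
- have vn : i.+1 %/ 3 < n by lia.
  pose v := Ordinal vn.
  have lv : ~~ leaf (@path_ends n) v by apply: pmid => /=; lia.
  by exists (inl (inl (exist _ v lv))) => /=; lia.
- have jn : i %/ 3 < n.-1 by lia.
  exists (inr (Ordinal jn, i %% 3 == 1)) => /=.
  case: eqP => /=; lia.
Qed.

Lemma pfib i : i < (3 * n - 4).+2 -> single (@lblP) i \/ pendant (@lblP) (pe (3 * n - 4)) i.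
Proof.
move=> iN; case: (ltnP i (3 * n - 4)) => iL; first by left; apply: psingle.
right; case: (i =P 3 * n - 4) => [-> | ne].
- exists 0; split; first by apply: psingle; lia.
  move=> j; rewrite /pe; lia.
- exists (3 * n - 4).-1; split; first by apply: psingle; lia.
  move=> j; rewrite /pe; lia.
Qed.
End Path.

Definition ce (N : nat) : rel nat := fun i j =>
  (i < N) && (j < N) && [|| i.+1 == j, j.+1 == i, (i == N.-1) && (j == 0) | (j == N.-1) && (i == 0)].

Section Cycle.
Variables (m : nat) (alpha : 'I_m -> nat).
Hypothesis m1 : 0 < m.

Lemma ordSv (j : 'I_m) : nat_of_ord (ordS j) = if j.+1 == m then 0 else j.+1.
Proof.
rewrite /ordS /=; case: eqP => [->|ne]; first by rewrite modnn.
rewrite modn_small //; have := ltn_ord j; lia.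
Qed.

Lemma cendpt (h : 'I_m * bool) : nat_of_ord (endpt (@cycle_ends m) h) =
  if h.2 then (if h.1.+1 == m then 0 else h.1.+1) else h.1.
Proof. case: h => j []; rewrite /endpt /= //; exact: ordSv. Qed.

Lemma cendptE (h : 'I_m * bool) v : (endpt (@cycle_ends m) h == v) =
  (nat_of_ord (endpt (@cycle_ends m) h) == nat_of_ord v).
Proof. by []. Qed.

Lemma cnl (v : 'I_m) : ~~ leaf (@cycle_ends m) v.
Proof.
rewrite /leaf /deg.
set S := [set h | _].
have : [set (ord_pred v, true); (v, false)] \subset S.
  apply/subsetP => h; rewrite !inE => /orP [] /eqP -> ; rewrite /endpt //=.
  by rewrite ord_predK.
move/subset_leq_card; rewrite cards2 => H; apply/negP => /eqP S1; move: H; by rewrite S1 xpair_eqE andbF.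
Qed.

Definition lblC (x : S2_vertex (@cycle_ends m) alpha) : nat :=
  match x with
  | inl (inl v) => if nat_of_ord (val v) == 0 then 3 * m - 1 else 3 * nat_of_ord (val v) - 1
  | inl (inr c) => 0
  | inr h => 3 * nat_of_ord h.1 + h.2
  end.

Lemma cadj x y : S2_adj (@cycle_ends m) alpha x y = ce (3 * m) (lblC x) (lblC y).
Proof.
case: x => [[[v pv]|[[v i] pv]]|[j s]]; try by case/negP: (cnl v).
all: case: y => [[[w pw]|[[w i'] pw]]|[j' s']]; try by case/negP: (cnl w).
all: rewrite /= ?cendptE ?cendpt ?ord_eqE /ce.
all: (try have := ltn_ord v); (try have := ltn_ord w); (try have := ltn_ord j); (try have := ltn_ord j');
  (try case: s); (try case: s'); rewrite /=; intros; repeat (case: ifP => ?);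
  apply/idP/idP; lia.
Qed.

Lemma ce_sym N : symmetric (ce N).
Proof. move=> i j; rewrite /ce; apply/idP/idP; lia. Qed.

Lemma cadj_sym : symmetric (S2_adj (@cycle_ends m) alpha).
Proof. by move=> x y; rewrite !cadj ce_sym. Qed.

Lemma clt x : lblC x < 3 * m.
Proof.
case: x => [[[v pv]|[[v i] pv]]|[j s]] /=;
  (try have := ltn_ord v); (try have := ltn_ord j); (try case: s);
  repeat (case: ifP => ?); intros; lia.
Qed.

Lemma csingle i : single (@lblC) i.
Proof.
move=> [[[v pv]|[[v a] pv]]|[j s]]; try by case/negP: (cnl v).
all: move=> [[[w pw]|[[w b] pw]]|[j' s']]; try by case/negP: (cnl w).
all: rewrite /=;
  (try have := ltn_ord v); (try have := ltn_ord w); (try have := ltn_ord j); (try have := ltn_ord j');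
  repeat (case: ifP => ?); (try case: s); (try case: s'); intros; try (exfalso; lia).
all: try (have e : v = w by apply/ord_inj; lia); try (subst w; by rewrite (bool_irrelevance pv pw)).
all: have e : j = j' by apply/ord_inj; lia.
all: by subst.
Qed.

Lemma csurj i : i < 3 * m -> exists x, lblC x = i.
Proof.
move=> iN.
case: (boolP (i %% 3 == 2)) => i2.
- case: (i =P 3 * m - 1) => [ie|ne].
  + pose v := Ordinal m1.
    by exists (inl (inl (exist _ v (cnl v)))) => /=.
  + have vn : i.+1 %/ 3 < m by lia.
    pose v := Ordinal vn.
    exists (inl (inl (exist _ v (cnl v)))) => /=.
    case: ifP => /= ?; lia.
- have jn : i %/ 3 < m by lia.
  exists (inr (Ordinal jn, i %% 3 == 1)) => /=.
  case: eqP => /=; lia.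
Qed.
End Cycle.

Definition dC i := i %% 3 == 2.

Lemma ceC N i j : i < N -> j < N -> ce N i j = [|| i.+1 == j, j.+1 == i, (i == N.-1) && (j == 0) | (j == N.-1) && (i == 0)].
Proof. by move=> iN jN; rewrite /ce iN jN. Qed.

Lemma ppC i : pp dC i = if i %% 3 == 0 then i.+1 else i.-1.
Proof. rewrite /pp /dC; case: ifP; case: ifP; lia. Qed.

Lemma cyc_std N : 3 <= N -> N %% 3 = 0 ->
  (forall i, i < N -> dC i -> exists j, [&& j < N, ~~ dC j & ce N i j]) /\
  (forall i, i < N -> ~~ dC i -> (exists j, [&& j < N, dC j & ce N i j]) /\
      [&& pp dC i < N, ~~ dC (pp dC i), ce N i (pp dC i),
          pp dC (pp dC i) == i & pp dC i != i]).
Proof.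
move=> N3 N0; split.
- move=> i iN di; exists i.-1; move: di; rewrite /dC ceC; lia.
- move=> i iN di; split.
  + case: (i =P 0) => [->|i0]; first by exists N.-1; rewrite /dC ceC; lia.
    case: (i %% 3 =P 0) => i30.
    * exists i.-1; move: di; rewrite /dC => di; rewrite ceC; lia.
    * exists i.+1; move: di; rewrite /dC => di; rewrite ceC; lia.
  + move: di; rewrite /dC => di; rewrite ppC; case: ifP => i30; rewrite ppC /dC ceC; try lia; case: ifP; lia.
Qed.

Definition wDc N i := match i with 0 => N.-1 | 1 => 2 | 4 => 3 | 5 => 6 | 8 => 7 | 9 => 10
  | _ => 0 end.
Definition wPc N i := match i with 2 => 1 | 3 => 4 | 6 => 5 | 7 => 8 | 10 => 9
  | 11 => if N == 12 then 0 else 12 | _ => 0 end.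

Lemma cyc_win N : 12 <= N -> N %% 3 = 0 ->
  let d := dW dC in let e := rm (ce N) 2 3 in
  (forall i, i < N -> d i -> exists j, [&& j < N, ~~ d j & e i j]) /\
  (forall i, i < N -> ~~ d i -> (exists j, [&& j < N, d j & e i j]) /\
      [&& pp d i < N, ~~ d (pp d i), e i (pp d i),
          pp d (pp d i) == i & pp d i != i]).
Proof.
move=> N12 N3 d e.
have [S1 S2] := cyc_std (leq_trans (isT : 3 <= 12) N12) N3.
have dE : forall j, (j < 2) || (10 < j) -> d j = dC j.
  move=> j hj; rewrite /d /dW /dC; case: (2 <= j <= 11) /andP => [?|_ //]; lia.
have eE : forall i j, 11 < i -> e i j = ce N i j.
  move=> i j hi; rewrite /e /rm; apply/andP/idP => [[]//|->]; split => //; lia.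
have far : forall i j, 11 < i -> ce N i j -> (j < 2) || (10 < j).
  move=> i j hi; rewrite /ce; lia.
split.
- move=> i iN di; case: (leqP i 11) => i11.
  + exists (wPc N i); move: iN i11 di; rewrite /d /e /rm /dW /dC /ce.
    by do 12 (try case: i => [|i]); move=> /= *; repeat (case: ifP => /=); lia.
  + have di' : dC i by rewrite -dE ?di //; lia.
    case: (S1 i iN di') => j /and3P [jN dj ej]; exists j.
    by rewrite jN dE ?dj ?eE //; apply: far ej.
- move=> i iN di; case: (leqP i 11) => i11.
  + split.
    * exists (wDc N i); move: iN i11 di; rewrite /d /e /rm /dW /dC /ce.
      by do 12 (try case: i => [|i]); move=> /= *; repeat (case: ifP => /=); lia.
    * move: iN i11 di; rewrite /pp /d /e /rm /dW /dC /ce.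
      by do 12 (try case: i => [|i]); move=> /= *; repeat (case: ifP => /=); lia.
  + have di' : ~~ dC i by rewrite -dE ?di //; lia.
    case: (S2 i iN di') => [[j /and3P [jN dj ej]]].
    have ppE : forall k, 11 < k -> pp d k = pp dC k.
      move=> k hk; rewrite /pp dE //; lia.
    rewrite ppE //.
    move=> /and5P [pN pd pe' ppi pne].
    have pf : (pp dC i < 2) || (10 < pp dC i) by apply: far pe'.
    split.
    * exists j; by rewrite jN dE ?dj ?eE //; apply: far ej.
    * rewrite pN dE // pd eE // pe' ppE ?ppi //; rewrite ppC; case: ifP; lia.
Qed.
Lemma chkP k : 2 <= k <= 5 -> checkN (3*k-4).+2 (pe (3*k-4)).
Proof.
move=> h; have : k = 2 \/ k = 3 \/ k = 4 \/ k = 5 by lia.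
case=> [->|[->|[->|->]]]; vm_compute; reflexivity.
Qed.
Lemma chkC k : 1 <= k <= 3 -> checkN (3*k) (ce (3*k)).
Proof.
move=> h; have : k = 1 \/ k = 2 \/ k = 3 by lia.
case=> [->|[->|->]]; vm_compute; reflexivity.
Qed.

Section Final.
Variables (T : finType) (adj : rel T) (lbl : T -> nat) (e : rel nat) (N : nat).
Hypothesis Hadj : forall x y, adj x y = e (lbl x) (lbl y).
Hypothesis Hsurj : forall i, i < N -> exists x, lbl x = i.
Hypothesis Hlt : forall x, lbl x < N.
Hypothesis Hsym : symmetric adj.

Lemma build_of (d : nat -> bool) (p : nat -> nat) :
 (forall i, i < N -> d i -> exists j, [&& j < N, ~~ d j & e i j]) ->
 (forall i, i < N -> ~~ d i -> (exists j, [&& j < N, d j & e i j]) /\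
     [&& p i < N, ~~ d (p i), e i (p i), p (p i) == i & p i != i]) ->
 (forall i, i < N -> ~~ d i -> single lbl i) -> DPDP adj.
Proof.
move=> H1 H2 H3; apply: (blowup_build Hadj Hsurj Hlt (d := d) (p := p)) => //.
- by move=> i iN di; case: (H1 i iN di) => j /and3P [h1 h2 h3]; exists j.
- move=> i iN di; case: (H2 i iN di) => [[j /and3P [h1 h2 h3]] /and5P [g1 g2 g3 /eqP g4 g5]].
  split; first by exists j.
  by [].
Qed.

Lemma nonmin_of (a b : nat) (x0 y0 : T) : lbl x0 = a -> lbl y0 = b ->
  single lbl a -> single lbl b -> a != b -> e a b ->
  (forall adj2 : rel T, (forall x y, adj2 x y = rm e a b (lbl x) (lbl y)) -> DPDP adj2) ->
  ~ minimal_DPDP adj.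
Proof.
move=> lx ly sa sb ab eab Hb [_ Hmin].
pose adj2 x y := adj x y && ~~ ((x == x0) && (y == y0) || (x == y0) && (y == x0)).
have E0 : forall x, (x == x0) = (lbl x == a).
  move=> x; apply/eqP/eqP => [-> //|]; by move/sa => /(_ x0 lx).
have E1 : forall x, (x == y0) = (lbl x == b).
  move=> x; apply/eqP/eqP => [-> //|]; by move/sb => /(_ y0 ly).
have H2 : forall x y, adj2 x y = rm e a b (lbl x) (lbl y).
  by move=> x y; rewrite /adj2 /rm Hadj !E0 !E1.
apply: (Hmin adj2 _ _ _ (Hb adj2 H2)).
- move=> x y; rewrite /adj2 [adj x y]Hsym.
  by case: (x == x0); case: (y == y0); case: (x == y0); case: (y == x0).
- by move=> x y /andP [].
- by exists x0, y0; rewrite /adj2 !eqxx Hadj lx ly eab.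
Qed.
End Final.

Lemma path_part (n : nat) (alpha : 'I_n -> nat) : 2 <= n ->
     (forall v, leaf (@path_ends n) v -> 0 < alpha v) ->
     DPDP (S2_adj (@path_ends n) alpha) /\
     (minimal_DPDP (S2_adj (@path_ends n) alpha) <-> n \in [:: 2; 3; 4; 5]).
Proof.
move=> n2 Ha.
have L2 : 2 <= 3 * n - 4 by lia.
have L3 : (3 * n - 4) %% 3 = 2 by lia.
have Hadj := @padj n alpha n2.
have Hsurj := psurj n2 Ha.
have Hlt := @plt n alpha n2.
have D : DPDP (S2_adj (@path_ends n) alpha).
  have [S1 S2] := path_std L2 L3.
  apply: (build_of Hadj Hsurj Hlt S1 S2) => i iN di.
  apply: (@psingle n alpha n2); move: di; rewrite /dP; lia.
split => //.
case: (leqP n 5) => n5.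
- have -> : n \in [:: 2; 3; 4; 5] by rewrite !inE; lia.
  split => // _; split => //.
  apply: (minimal_refute Hadj Hlt Hsurj (pfib alpha n2) (@padj_sym n alpha n2)).
  apply: checkN_ok; apply: chkP; lia.
- have -> : (n \in [:: 2; 3; 4; 5]) = false by rewrite !inE; lia.
  split => // Hm; exfalso; move: Hm.
  have L14 : 13 < 3 * n - 4 by lia.
  have [x0 l0] := Hsurj 2 (ltac:(lia)).
  have [y0 l1] := Hsurj 3 (ltac:(lia)).
  apply: (nonmin_of Hadj (@padj_sym n alpha n2) l0 l1) => //.
  + apply: (@psingle n alpha n2); lia.
  + apply: (@psingle n alpha n2); lia.
  + rewrite /pe; lia.
  + move=> adj2 H2.
    have [S1 S2] := path_win L14 L3.
    apply: (build_of H2 Hsurj Hlt S1 S2) => i iN di.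
    apply: (@psingle n alpha n2); move: di; rewrite /dW /dP; lia.
Qed.

Lemma cycle_part (m : nat) (alpha : 'I_m -> nat) : 0 < m ->
     DPDP (S2_adj (@cycle_ends m) alpha) /\
     (minimal_DPDP (S2_adj (@cycle_ends m) alpha) <-> m \in [:: 1; 2; 3]).
Proof.
move=> m1.
have N3 : 3 <= 3 * m by lia.
have N0 : (3 * m) %% 3 = 0 by lia.
have Hadj := @cadj m alpha m1.
have Hsurj := csurj alpha m1.
have Hlt := @clt m alpha m1.
have D : DPDP (S2_adj (@cycle_ends m) alpha).
  have [S1 S2] := cyc_std N3 N0.
  apply: (build_of Hadj Hsurj Hlt S1 S2) => i iN di.
  exact: (@csingle m alpha m1).
split => //.
case: (leqP m 3) => m3.
- have -> : m \in [:: 1; 2; 3] by rewrite !inE; lia.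
  split => // _; split => //.
  apply: (minimal_refute Hadj Hlt Hsurj _ (@cadj_sym m alpha m1)).
  + by move=> i _; left; exact: (@csingle m alpha m1).
  + apply: checkN_ok; apply: chkC; lia.
- have -> : (m \in [:: 1; 2; 3]) = false by rewrite !inE; lia.
  split => // Hm; exfalso; move: Hm.
  have N12 : 12 <= 3 * m by lia.
  have [x0 l0] := Hsurj 2 (ltac:(lia)).
  have [y0 l1] := Hsurj 3 (ltac:(lia)).
  apply: (nonmin_of Hadj (@cadj_sym m alpha m1) l0 l1) => //.
  + exact: (@csingle m alpha m1).
  + exact: (@csingle m alpha m1).
  + rewrite /ce; lia.
  + move=> adj2 H2.
    have [S1 S2] := cyc_win N12 N0.
    apply: (build_of H2 Hsurj Hlt S1 S2) => i iN di.
    exact: (@csingle m alpha m1).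
Qed.

Theorem corollary4p7 :
  (forall (n : nat) (alpha : 'I_n -> nat), 2 <= n ->
     (forall v, leaf (@path_ends n) v -> 0 < alpha v) ->
     DPDP (S2_adj (@path_ends n) alpha) /\
     (minimal_DPDP (S2_adj (@path_ends n) alpha) <-> n \in [:: 2; 3; 4; 5]))
  /\
  (forall (m : nat) (alpha : 'I_m -> nat), 0 < m ->
     (forall v, leaf (@cycle_ends m) v -> 0 < alpha v) ->
     DPDP (S2_adj (@cycle_ends m) alpha) /\
     (minimal_DPDP (S2_adj (@cycle_ends m) alpha) <-> m \in [:: 1; 2; 3])).
Proof.
split.
- exact: path_part.
- move=> m alpha m1 _; exact: cycle_part.
Qed.
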